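(* Let $m,n$ be positive integers, $(X,\mu)$ a measure space and $\{\psi_{i,j}\}_{1\le i\le 2m,\,1\le j\le 2n}$ complex-valued functions on $X$. Suppose $$R(i_1,\dots,i_{2m})=\int_X\prod_{s=1}^m\det\begin{pmatrix}\psi_{2s-1,i_{2s-1}}(x)&\psi_{2s-1,i_{2s}}(x)\\ \psi_{2s,i_{2s-1}}(x)&\psi_{2s,i_{2s}}(x)\end{pmatrix}\mu(\mathrm{d}x)$$ is well-defined for all $1\le i_1,\dots,i_{2m}\le 2n$. Then $$\frac{1}{n!}\int_{X^n}\prod_{s=1}^m\det\big(\psi_{2s-1,j}(x_k)\,\big|\,\psi_{2s,j}(x_k)\big)_{1\le j\le 2n,\,1\le k\le n}\prod_{j=1}^n\mu(\mathrm{d}x_j)=\mathrm{Pf}^{[2m]}\big(R(i_1,\dots,i_{2m})\big)_{1\le i_1,\dots,i_{2m}\le 2n}.$$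
   Context: $\det(a_{j,k}\,|\,b_{j,k})_{1\le j\le 2n,1\le k\le n}$ denotes the determinant of the $2n\times 2n$ matrix whose $j$-th row is $(a_{j,1},b_{j,1},a_{j,2},b_{j,2},\dots,a_{j,n},b_{j,n})$. The array $R$ changes sign when $i_{2s-1}$ and $i_{2s}$ are interchanged, for each $s$. For such an array $B$ indexed by $\{1,\dots,2n\}^{2m}$, with $\mathfrak{E}_{2n}=\{\sigma\in\mathfrak{S}_{2n}:\sigma(2i-1)<\sigma(2i),\ 1\le i\le n\}$, $$\mathrm{Pf}^{[2m]}(B):=\frac{1}{n!}\sum_{\sigma_1,\dots,\sigma_m\in\mathfrak{E}_{2n}}\mathrm{sgn}(\sigma_1)\cdots\mathrm{sgn}(\sigma_m)\prod_{i=1}^nB(\sigma_1(2i-1),\sigma_1(2i),\dots,\sigma_m(2i-1),\sigma_m(2i)).$$ *)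

(* Defs.v *)
From mathcomp Require Import all_boot all_algebra all_fingroup.
From mathcomp Require Import all_classical all_reals all_analysis.
From mathcomp Require Import complex.

Set Implicit Arguments.
Unset Strict Implicit.
Unset Printing Implicit Defensive.

Import GRing.Theory Num.Theory.
Local Open Scope ring_scope.

Lemma ev_ord_proof n (i : 'I_n) : ((i : nat).*2 < n.*2)%N.
Proof. by rewrite ltn_double. Qed.
Lemma od_ord_proof n (i : 'I_n) : ((i : nat).*2.+1 < n.*2)%N.
Proof. by rewrite ltn_Sdouble. Qed.
Definition ev_ord n (i : 'I_n) : 'I_(n.*2) := Ordinal (ev_ord_proof i).
Definition od_ord n (i : 'I_n) : 'I_(n.*2) := Ordinal (od_ord_proof i).

Lemma half_ord_proof n (c : 'I_(n.*2)) : ((c : nat)./2 < n)%N.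
Proof.
have := ltn_ord c; rewrite -[in X in X -> _](odd_double_half c).
case: (odd c) => /=; rewrite ?add0n ?add1n.
- by rewrite ltn_Sdouble.
- by rewrite ltn_double.
Qed.
Definition half_ord n (c : 'I_(n.*2)) : 'I_n := Ordinal (half_ord_proof c).

Section Complex_integral.
Context {d : measure_display} {T : measurableType d} {R : realType}.
Variable mu : {measure set T -> \bar R}.

Definition cintegral (f : T -> R[i]) : R[i] :=
  Complex (Rintegral mu setT (fun x => complex.Re (f x)))
          (Rintegral mu setT (fun x => complex.Im (f x))).

Definition cintegrable (f : T -> R[i]) : Prop :=
  mu.-integrable setT (fun x => (complex.Re (f x))%:E) /\
  mu.-integrable setT (fun x => (complex.Im (f x))%:E).

(* Integral over T^n with respect to the n-fold product measure mu^{(x) n},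
   computed as an iterated integral  int dx_1 ... int dx_n f(x_1,...,x_n). *)
Fixpoint cintegral_pow (n : nat) : (n.-tuple T -> R[i]) -> R[i] :=
  match n return (n.-tuple T -> R[i]) -> R[i] with
  | 0 => fun f => f [tuple]
  | n'.+1 => fun f => cintegral (fun x => cintegral_pow (fun t => f [tuple of x :: t]))
  end.
End Complex_integral.

(* An index tuple (i_1,...,i_2m) is a finite function 'I_(m.*2) -> 'I_(n.*2);
   E_{2n} = permutations sigma with sigma(2i) < sigma(2i+1) (0-based). *)
Definition Eperm n (s : 'S_(n.*2)) : bool :=
  [forall i : 'I_n, (s (ev_ord i) < s (od_ord i))%N].

Definition hyperpf {C : comUnitRingType} (m n : nat)
    (B : {ffun 'I_(m.*2) -> 'I_(n.*2)} -> C) : C :=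
  (n`!%:R)^-1 *
  \sum_(sg : {ffun 'I_m -> 'S_(n.*2)} | [forall s, Eperm (sg s)])
    ((\prod_(s < m) (-1) ^+ (odd_perm (sg s))) *
     \prod_(i < n) B [ffun t : 'I_(m.*2) =>
                        sg (half_ord t) (if odd t then od_ord i else ev_ord i)]).

(* Main.v *)
Require Import Defs.
From mathcomp Require Import all_boot all_algebra all_fingroup.
From mathcomp Require Import all_classical all_reals all_analysis.
From mathcomp Require Import complex.
From mathcomp Require Import ring.
Import GRing.Theory Num.Theory.
Local Open Scope ring_scope.

Section CI.
Context {d : measure_display} {T : measurableType d} {R : realType}.
Variable mu : {measure set T -> \bar R}.

Lemma addC_RI (a b c e : R) : (Complex a b) + (Complex c e) = Complex (a + c) (b + e).
Proof. by []. Qed.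
Lemma mulC_RI (a b c e : R) : (Complex a b) * (Complex c e) = Complex (a * c - b * e) (a * e + b * c).
Proof. by []. Qed.
Lemma zeroC_RI : (0 : R[i]) = Complex 0 0.
Proof. by []. Qed.

Lemma Rintegral0 : Rintegral mu setT (fun _ => (0:R)) = 0.
Proof. by rewrite /Rintegral integral0. Qed.

Lemma RintZl (f : T -> R) r : mu.-integrable setT (EFin \o f) ->
  Rintegral mu setT (fun x => r * f x) = r * Rintegral mu setT f.
Proof.
move=> intf; rewrite /Rintegral (_ : r = fine r%:E)// -fineM//; last first.
  exact: integrable_fin_num.
by congr fine; under eq_integral do rewrite EFinM; exact: integralZl.
Qed.

Lemma cintegrable0 : cintegrable mu (fun _ => 0).
Proof. by split; exact: integrable0. Qed.

Lemma cintegrableD f g : cintegrable mu f -> cintegrable mu g ->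
  cintegrable mu (fun x => f x + g x).
Proof.
move=> [f1 f2] [g1 g2]; split.
- apply: eq_integrable (integrableD _ f1 g1) => // x _.
  by case: (f x) => ? ?; case: (g x).
- apply: eq_integrable (integrableD _ f2 g2) => // x _.
  by case: (f x) => ? ?; case: (g x).
Qed.

Lemma cintegralD f g : cintegrable mu f -> cintegrable mu g ->
  cintegral mu (fun x => f x + g x) = cintegral mu f + cintegral mu g.
Proof.
move=> [f1 f2] [g1 g2]; rewrite /cintegral addC_RI.
rewrite -!RintegralD //.
by congr Complex; apply: eq_Rintegral => x _; case: (f x) => ? ?; case: (g x).
Qed.

Lemma cintegrableMr f k : cintegrable mu f -> cintegrable mu (fun x => f x * k).
Proof.
case: k => a b [f1 f2]; split.
- apply: eq_integrable (integrableB _ (integrableZl _ a f1) (integrableZl _ b f2)) => // x _.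
  by case: (f x) => ? ? /=; rewrite -EFinM -EFinD; congr (_%:E); ring.
- apply: eq_integrable (integrableD _ (integrableZl _ b f1) (integrableZl _ a f2)) => // x _.
  by case: (f x) => ? ? /=; rewrite -!EFinM -EFinD; congr (_%:E); ring.
Qed.

Lemma intZ (g : T -> R) r : mu.-integrable setT (EFin \o g) ->
  mu.-integrable setT (EFin \o (fun x => r * g x)).
Proof. by move=> ig; apply: eq_integrable (integrableZl _ r ig) => // x _; rewrite /= EFinM. Qed.

Lemma cintegralMr f k : cintegrable mu f ->
  cintegral mu (fun x => f x * k) = cintegral mu f * k.
Proof.
case: k => a b [f1 f2]; rewrite /cintegral mulC_RI.
have i1 := @intZ _ a f1; have i2 := @intZ _ b f2.
have i3 := @intZ _ b f1; have i4 := @intZ _ a f2.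
congr Complex.
- rewrite (_ : (fun x => _) = (fun x => a * complex.Re (f x) - b * complex.Im (f x))); last first.
    by apply: funext => x; case: (f x) => ? ? /=; ring.
  by rewrite RintegralB //= !RintZl //; ring.
- rewrite (_ : (fun x => _) = (fun x => b * complex.Re (f x) + a * complex.Im (f x))); last first.
    by apply: funext => x; case: (f x) => ? ? /=; ring.
  by rewrite RintegralD //= !RintZl //; ring.
Qed.

Lemma cintegrable_sum (I : Type) (r : seq I) (P : pred I) (h : I -> T -> R[i]) :
  (forall i, P i -> cintegrable mu (h i)) ->
  cintegrable mu (fun x => \sum_(i <- r | P i) h i x).
Proof.
elim: r => [_|i r ih hs].
  by under eq_fun do rewrite big_nil; exact: cintegrable0.
under eq_fun do rewrite big_cons.
have [Pi|Pi] := boolP (P i); last exact: ih.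
by apply: cintegrableD; [exact: hs|exact: ih].
Qed.

Lemma cintegral0 : cintegral mu (fun _ => 0) = 0.
Proof. by rewrite /cintegral /= Rintegral0. Qed.

Lemma cintegral_sum (I : Type) (r : seq I) (P : pred I) (h : I -> T -> R[i]) :
  (forall i, P i -> cintegrable mu (h i)) ->
  cintegral mu (fun x => \sum_(i <- r | P i) h i x) = \sum_(i <- r | P i) cintegral mu (h i).
Proof.
elim: r => [_|i r ih hs].
  by under eq_fun do rewrite big_nil; rewrite big_nil cintegral0.
under eq_fun do rewrite big_cons.
rewrite big_cons.
have [Pi|Pi] := boolP (P i); last exact: ih.
rewrite cintegralD ?ih //; first exact: hs.
exact: cintegrable_sum.
Qed.

Lemma cintegral_pow_sumprod n (A : finType) (P : pred A) (c : A -> R[i])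
  (f : A -> 'I_n -> T -> R[i]) : (forall a i, cintegrable mu (f a i)) ->
  cintegral_pow mu (fun xs : n.-tuple T => \sum_(a | P a) c a * \prod_(i < n) f a i (tnth xs i))
  = \sum_(a | P a) c a * \prod_(i < n) cintegral mu (f a i).
Proof.
elim: n c f => [|n IH] c f hf /=.
  by apply: eq_bigr => a _; rewrite !big_ord0.
have -> : (fun x => cintegral_pow mu (fun t : n.-tuple T =>
     \sum_(a | P a) c a * \prod_(i < n.+1) f a i (tnth [tuple of x :: t] i))) =
   (fun x => \sum_(a | P a) (c a * f a ord0 x) * \prod_(i < n) cintegral mu (f a (lift ord0 i))).
  apply: funext => x; rewrite -IH; last by move=> a i; exact: hf.
  congr cintegral_pow; apply: funext => t; apply: eq_bigr => a _.
  rewrite big_ord_recl -mulrA; congr (_ * (_ * _)).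
  by apply: eq_bigr => i _; rewrite tnthS.
rewrite (_ : (fun x => _) = (fun x => \sum_(a | P a) f a ord0 x *
     (c a * \prod_(i < n) cintegral mu (f a (lift ord0 i))))); last first.
  by apply: funext => x; apply: eq_bigr => a _; rewrite mulrA [c a * _]mulrC.
rewrite cintegral_sum; last by move=> a _; apply: cintegrableMr.
apply: eq_bigr => a _; rewrite cintegralMr // big_ord_recl.
by rewrite mulrA [_ * c a]mulrC mulrA.
Qed.
End CI.

Section Perm.
Variable n : nat.

Lemma half_ev (i : 'I_n) : half_ord (ev_ord i) = i.
Proof. by apply: val_inj; rewrite /= doubleK. Qed.
Lemma half_od (i : 'I_n) : half_ord (od_ord i) = i.
Proof. by apply: val_inj; rewrite /= uphalf_double. Qed.
Lemma odd_ev (i : 'I_n) : odd (ev_ord i) = false.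
Proof. by rewrite /= odd_double. Qed.
Lemma odd_od (i : 'I_n) : odd (od_ord i) = true.
Proof. by rewrite /= odd_double. Qed.
Lemma ev_od (i j : 'I_n) : (ev_ord i == od_ord j) = false.
Proof. by apply/negbTE/eqP => /(congr1 (fun c : 'I_(n.*2) => odd c)); rewrite odd_ev odd_od. Qed.
Lemma ev_inj : injective (@ev_ord n).
Proof. by move=> i j /(congr1 (@half_ord n)); rewrite !half_ev. Qed.
Lemma od_inj : injective (@od_ord n).
Proof. by move=> i j /(congr1 (@half_ord n)); rewrite !half_od. Qed.

Lemma prod_pair (C : comRingType) (h : 'I_(n.*2) -> C) :
  \prod_c h c = \prod_(i < n) (h (ev_ord i) * h (od_ord i)).
Proof.
rewrite (partition_big (@half_ord n) xpredT) //=.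
apply: eq_bigr => i _.
rewrite (bigD1 (ev_ord i)) /=; last by rewrite half_ev.
rewrite (big_pred1 (od_ord i)) // => c /=.
apply/andP/eqP => [[/eqP hc ne]|->]; last by rewrite half_od eq_sym ev_od.
have e : (c : nat) = (odd c + (i : nat).*2)%N.
  by rewrite -hc /= odd_double_half.
apply: val_inj; move: e ne; case: (odd c) => /= e ne //.
by case/eqP: ne; apply: val_inj; rewrite /= e.
Qed.

Definition Ek (k : nat) (P : 'I_n -> bool) := [forall i : 'I_n, (i < k)%N ==> P i].

Lemma Ek0 P : Ek 0 P.
Proof. by apply/forallP. Qed.
Lemma Ekn P : Ek n P = [forall i, P i].
Proof. by rewrite /Ek; apply/forallP/forallP => H i; [exact: implyP (H i) (ltn_ord i)|rewrite H implybT]. Qed.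
Lemma EkS k (hk : (k < n)%N) P : Ek k.+1 P = Ek k P && P (Ordinal hk).
Proof.
apply/forallP/andP => [H|[/forallP H1 H2] i].
  split; last exact: implyP (H (Ordinal hk)) (ltnSn k).
  by apply/forallP => i; apply/implyP => ik; exact: implyP (H i) (ltnW ik).
apply/implyP; rewrite ltnS leq_eqVlt => /orP[/eqP e|ik].
  by have -> : i = Ordinal hk by apply: val_inj.
exact: implyP (H1 i) ik.
Qed.
Lemma eq_Ek k P Q : (forall i : 'I_n, (i < k)%N -> P i = Q i) -> Ek k P = Ek k Q.
Proof.
move=> H; apply/forallP/forallP => H' i; apply/implyP => ik.
  by rewrite -H //; exact: implyP (H' i) ik.
by rewrite H //; exact: implyP (H' i) ik.
Qed.

Definition tp (i : 'I_n) : 'S_(n.*2) := tperm (ev_ord i) (od_ord i).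

Lemma tp_ev i j : i != j -> tp i (ev_ord j) = ev_ord j.
Proof.
move=> ij; apply: tpermD; first by rewrite (inj_eq ev_inj).
by rewrite eq_sym ev_od.
Qed.
Lemma tp_od i j : i != j -> tp i (od_ord j) = od_ord j.
Proof.
move=> ij; apply: tpermD; first by rewrite ev_od.
by rewrite (inj_eq od_inj).
Qed.

Variable C : comRingType.
Variables F G : 'I_(n.*2) -> 'I_n -> C.
Definition aa i (s : 'S_(n.*2)) := F (s (ev_ord i)) i * G (s (od_ord i)) i.
Definition bb i (s : 'S_(n.*2)) := F (s (od_ord i)) i * G (s (ev_ord i)) i.
Definition HH k s := \prod_(i < n) (if (i < k)%N then aa i s - bb i s else aa i s).
Definition Ep (s : 'S_(n.*2)) (i : 'I_n) := (s (ev_ord i) < s (od_ord i))%N.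

Lemma step k : (k <= n)%N ->
  \sum_(s : 'S_(n.*2)) (-1) ^+ s * \prod_i aa i s =
  \sum_(s : 'S_(n.*2) | Ek k (Ep s)) (-1) ^+ s * HH k s.
Proof.
elim: k => [_|k IH hk].
  apply: eq_big => [s|s _]; first by rewrite Ek0.
  by rewrite /HH; congr (_ * _); apply: eq_bigr => i _.
rewrite IH ?(ltnW hk) //.
set i0 := Ordinal hk.
rewrite (bigID (fun s => Ep s i0)) /=.
rewrite [X in _ + X](reindex_inj (mulgI (tp i0))) /=.
have tpE (s : 'S_(n.*2)) (i : 'I_n) : i != i0 -> ((tp i0 * s)%g (ev_ord i) = s (ev_ord i)) /\
     ((tp i0 * s)%g (od_ord i) = s (od_ord i)).
  by move=> ne; rewrite !permM tp_ev 1?tp_od // eq_sym.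
have tpE0 (s : 'S_(n.*2)) : ((tp i0 * s)%g (ev_ord i0) = s (od_ord i0)) /\
     ((tp i0 * s)%g (od_ord i0) = s (ev_ord i0)).
  by rewrite !permM /tp tpermL tpermR.
have neq (s : 'S_(n.*2)) (i : 'I_n) : (s (ev_ord i) : nat) != s (od_ord i).
  by rewrite (inj_eq (@ord_inj _)) (inj_eq (@perm_inj _ s)) ev_od.
rewrite [X in X + _](eq_bigl (fun s => Ek k.+1 (Ep s))); last by move=> s; rewrite EkS.
rewrite [X in _ + X](eq_bigl (fun s => Ek k.+1 (Ep s))); last first.
  move=> s; rewrite EkS; congr andb.
    apply: eq_Ek => i ik; have ne : i != i0.
      by apply/eqP => e; move: ik; rewrite e ltnn.
    by rewrite /Ep; case: (tpE s i ne) => -> ->.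
  rewrite /Ep; case: (tpE0 s) => -> ->.
  by rewrite -leqNgt leq_eqVlt (negbTE (neq s i0)).
rewrite -big_split /=.
apply: eq_bigr => s _.
rewrite /tp odd_mul_tperm ev_od /= -/(tp i0).
rewrite /HH (bigD1 i0) //= [X in _ + _ * X](bigD1 i0) //= [X in _ = _ * X](bigD1 i0) //=.
rewrite ltnn ltnSn.
have -> : \prod_(i < n | i != i0) (if (i < k.+1)%N then aa i s - bb i s else aa i s) =
          \prod_(i < n | i != i0) (if (i < k)%N then aa i s - bb i s else aa i s).
  apply: eq_bigr => i ne; rewrite ltnS leq_eqVlt.
  suff -> : (i == k :> nat) = false by [].
  by apply/negbTE; apply: contra ne => /eqP e; apply/eqP/val_inj.
have -> : \prod_(i < n | i != i0) (if (i < k)%N then aa i (tp i0 * s) - bb i (tp i0 * s) else aa i (tp i0 * s)) =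
          \prod_(i < n | i != i0) (if (i < k)%N then aa i s - bb i s else aa i s).
  apply: eq_bigr => i ne; rewrite /aa /bb.
  by case: (tpE s i ne) => -> ->.
have -> : aa i0 (tp i0 * s) = bb i0 s.
  by rewrite /aa /bb; case: (tpE0 s) => -> ->.
by case: (odd_perm s); rewrite ?expr0 ?expr1 /=; ring.
Qed.

Lemma det_pf :
  \det (\matrix_(j < n.*2, c < n.*2) (if odd c then G j (half_ord c) else F j (half_ord c))) =
  \sum_(s : 'S_(n.*2) | Eperm s) (-1) ^+ s * \prod_(i < n) (aa i s - bb i s).
Proof.
rewrite -det_tr /determinant.
rewrite (_ : \sum_s _ = \sum_(s : 'S_(n.*2)) (-1) ^+ s * \prod_i aa i s); last first.
  apply: eq_bigr => s _; congr (_ * _).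
  rewrite prod_pair; apply: eq_bigr => i _.
  by rewrite !mxE odd_ev odd_od half_ev half_od.
rewrite (@step n (leqnn n)); apply: eq_big => [s|s _].
  by rewrite Ekn.
by rewrite /HH; congr (_ * _); apply: eq_bigr => i _; rewrite ltn_ord.
Qed.
End Perm.
Arguments aa {n C}.
Arguments bb {n C}.

Theorem proposition2p4 (R : realType) (d : measure_display) (X : measurableType d)
  (mu : {measure set X -> \bar R}) (m n : nat) (m_gt0 : (0 < m)%N) (n_gt0 : (0 < n)%N)
  (psi : 'I_(m.*2) -> 'I_(n.*2) -> X -> R[i]) :
  let Rint := fun (idx : {ffun 'I_(m.*2) -> 'I_(n.*2)}) (x : X) =>
    \prod_(s < m)
      (psi (ev_ord s) (idx (ev_ord s)) x * psi (od_ord s) (idx (od_ord s)) x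
       - psi (ev_ord s) (idx (od_ord s)) x * psi (od_ord s) (idx (ev_ord s)) x) in
  (forall idx, cintegrable mu (Rint idx)) ->
  (n`!%:R)^-1 *
    cintegral_pow mu (fun xs : n.-tuple X =>
      \prod_(s < m) \det (\matrix_(j < n.*2, c < n.*2)
         psi (if odd c then od_ord s else ev_ord s) j (tnth xs (half_ord c))))
  = hyperpf (fun idx => cintegral mu (Rint idx)).
Proof.
move=> Rint hint.
rewrite /hyperpf; congr (_ * _).
pose f := fun (sg : {ffun 'I_m -> 'S_(n.*2)}) (i : 'I_n) =>
  Rint [ffun t : 'I_(m.*2) => sg (half_ord t) (if odd t then od_ord i else ev_ord i)].
rewrite -(@cintegral_pow_sumprod _ _ _ mu n _ (fun sg : {ffun 'I_m -> 'S_(n.*2)} => [forall s, Eperm (sg s)])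
   (fun sg : {ffun 'I_m -> 'S_(n.*2)} => \prod_(s < m) (-1) ^+ (odd_perm (sg s))) f); last by move=> a i; exact: hint.
congr cintegral_pow; apply: funext => xs.
transitivity (\prod_(s < m) \sum_(r : 'S_(n.*2) | Eperm r) (-1) ^+ r *
   \prod_(i < n) (aa (fun j i => psi (ev_ord s) j (tnth xs i)) (fun j i => psi (od_ord s) j (tnth xs i)) i r
     - bb (fun j i => psi (ev_ord s) j (tnth xs i)) (fun j i => psi (od_ord s) j (tnth xs i)) i r)).
  apply: eq_bigr => s _; rewrite -det_pf; congr (\det _); apply/matrixP => j c.
  by rewrite !mxE; case: (odd c).
rewrite bigA_distr_big; apply: eq_big => [sg|sg _].
  by apply/familyP/forallP => H s; have := H s.
rewrite big_split /=; congr (_ * _).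
rewrite exchange_big; apply: eq_bigr => i _.
rewrite /f /Rint; apply: eq_bigr => s _.
by rewrite !ffunE half_ev half_od odd_ev odd_od /aa /bb.
Qed.
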